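(* For each of the following groups $G$ of order $24$ there exists a $(G,[1^3,2^2,17],12)$ Hadamard partitioned difference family: (a) $C_3\rtimes C_8=\langle a,b \mid a^8=b^3=1,\ ab^{-1}=ba\rangle$; (b) $SL(2,3)$, the group of $2\times 2$ matrices over $\mathbb{Z}_3$ of determinant $1$; (c) $\mathbb{Z}_3\times D_8$.
   Context: For a finite group $G$ (written additively, or multiplicatively in which case the difference of $x$ and $y$ is $xy^{-1}$), and $B\subseteq G$, $\Delta B$ is the multiset of differences of ordered pairs of distinct elements of $B$; for $\mathcal{F}=\{B_1,\dots,B_t\}$, $\Delta\mathcal{F}$ is the multiset union of the $\Delta B_i$. $\mathcal{F}$ is a $(G,[k_1,\dots,k_t],\lambda)$ partitioned difference family if the $B_i$ partition $G$, $|B_i|=k_i$, and $\Delta\mathcal{F}$ contains every non-identity element of $G$ exactly $\lambda$ times; it is Hadamard if $|G|=2\lambda$. Exponents in $[1^3,2^2,17]$ denote multiplicities (three blocks of size 1, two of size 2, one of size 17). $D_{2n}=\langle x,y\mid x^n=1,\ y^2=1,\ yx^i=x^{-i}y\rangle$ is the dihedral group of order $2n$, so $D_8$ has order $8$. *)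

(* Defs.v *)
From mathcomp Require Import all_boot all_order all_algebra all_fingroup all_solvable.
Set Implicit Arguments.
Unset Strict Implicit.
Unset Printing Implicit Defensive.

Local Open Scope group_scope.

Section PDF.
Variable gT : finGroupType.

Definition diff_mult (B : {set gT}) (g : gT) : nat :=
  #|[set p in setX B B | (p.1 != p.2) && (p.1 * p.2^-1 == g)]|.

Definition diff_mult_fam (F : seq {set gT}) (g : gT) : nat :=
  \sum_(B <- F) diff_mult B g.

Definition is_pdf (G : {set gT}) (ks : seq nat) (lambda : nat)
    (F : seq {set gT}) : Prop :=
  [/\ \bigcup_(B <- F) (B : {set gT}) = G,
      (forall i j, (i < size F)%N -> (j < size F)%N -> i != j ->
          [disjoint (nth set0 F i : {set gT}) & (nth set0 F j : {set gT})]),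
      map (fun B : {set gT} => #|B|) F = ks &
      (forall g, g \in G -> g != 1 -> diff_mult_fam F g = lambda)].

Definition hadamard_pdf_exists (G : {set gT}) (ks : seq nat) (lambda : nat)
    : Prop :=
  #|G| = (2 * lambda)%N /\ exists F : seq {set gT}, is_pdf G ks lambda F.

End PDF.

Definition SL23 : {set {'GL_2(3)}} :=
  [set g : {'GL_2(3)} | (\det (GLval g) == 1)%R].

Definition ks_1_1_1_2_2_17 : seq nat := [:: 1; 1; 1; 2; 2; 17]%N.

(* Main.v *)
Require Import Defs.
From mathcomp Require Import all_boot all_order all_algebra all_fingroup all_solvable zify.
Set Implicit Arguments. Unset Strict Implicit. Unset Printing Implicit Defensive.

Definition inv_of (mul : nat -> nat -> nat) (j : nat) : nat :=
  find (fun k => mul j k == 0) (iota 0 24).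
Definition dcount (mul : nat -> nat -> nat) (s : seq nat) (k : nat) : nat :=
  count (fun ij : nat * nat => (ij.1 != ij.2) && (mul ij.1 (inv_of mul ij.2) == k))
    [seq (i, j) | i <- s, j <- s].
Definition check (mul : nat -> nat -> nat) (Bs : seq (seq nat)) : bool :=
  [&& all (fun i => all (fun j => mul i j < 24) (iota 0 24)) (iota 0 24),
      mul 0 0 == 0,
      all (fun j => mul j (inv_of mul j) == 0) (iota 0 24),
      all (fun j => inv_of mul j < 24) (iota 0 24),
      map size Bs == ks_1_1_1_2_2_17,
      all uniq Bs, all (all (fun i => i < 24)) Bs,
      all (fun k => k \in flatten Bs) (iota 0 24),
      all (fun i => all (fun j => (i == j) || ~~ has (fun x => x \in nth [::] Bs j) (nth [::] Bs i))
         (iota 0 6)) (iota 0 6) &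
      all (fun k => sumn (map (fun s => dcount mul s k) Bs) == 12) (iota 1 23)].

Lemma uniq_map_inj (T1 T2 : eqType) (f : T1 -> T2) s :
  uniq (map f s) -> {in s &, injective f}.
Proof.
elim: s => //= a s IH /andP[Hn Hu] x y; rewrite !inE.
move=> /predU1P[->|xs] /predU1P[->|ys] // Hf.
- by move: Hn; rewrite Hf (map_f f ys).
- by move: Hn; rewrite -Hf (map_f f xs).
- exact: IH.
Qed.

Lemma card_set_seq (T : finType) (l : seq T) : uniq l -> #|[set x in l]| = size l.
Proof. by move/card_uniqP => <-; apply: eq_card => x; rewrite inE. Qed.

Lemma card_set_seq_le (T : finType) (l : seq T) : #|[set x in l]| <= size l.
Proof. by rewrite (@eq_card _ _ (mem l)) ?card_size // => x; rewrite inE. Qed.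

Lemma card_set_seq_uniq (T : finType) (l : seq T) : #|[set x in l]| = size l -> uniq l.
Proof. by move=> H; apply/card_uniqP; rewrite -H; apply: eq_card => x; rewrite inE. Qed.

Local Open Scope group_scope.

Section Gen.
Variables (gT : finGroupType) (G : {set gT}) (e : nat -> gT) (mul : nat -> nat -> nat)
  (Bs : seq (seq nat)).
Hypothesis Hmul : forall i j, (i < 24)%N -> (j < 24)%N -> e i * e j = e (mul i j).
Hypothesis Hc1 : all (fun i => all (fun j => mul i j < 24) (iota 0 24)) (iota 0 24).
Hypothesis Hc2 : mul 0 0 == 0.
Hypothesis Hc3 : all (fun j => mul j (inv_of mul j) == 0) (iota 0 24).
Hypothesis Hc4 : all (fun j => inv_of mul j < 24) (iota 0 24).

Definition Eset := [set x in map e (iota 0 24)].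

Lemma EsetP x : reflect (exists2 k, (k < 24)%N & x = e k) (x \in Eset).
Proof.
rewrite inE; apply: (iffP mapP) => [[k]|[k]]; rewrite ?mem_iota => Hk ->;
 by exists k; rewrite ?mem_iota.
Qed.

Lemma e_in k : (k < 24)%N -> e k \in Eset.
Proof. by move=> Hk; apply/EsetP; exists k. Qed.

Lemma mul_lt i j : (i < 24)%N -> (j < 24)%N -> (mul i j < 24)%N.
Proof.
move=> Hi Hj.
by move/allP: Hc1 => /(_ i); rewrite mem_iota => /(_ Hi) /allP /(_ j); rewrite mem_iota; apply.
Qed.

Lemma e0 : e 0 = 1.
Proof.
have := Hmul (isT : (0 < 24)%N) (isT : (0 < 24)%N); rewrite (eqP Hc2) => h.
by apply: (mulgI (e 0)); rewrite mulg1.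
Qed.

Lemma inv_lt j : (j < 24)%N -> (inv_of mul j < 24)%N.
Proof.
move=> Hj.
by move/allP: Hc4 => /(_ j); rewrite mem_iota; apply.
Qed.

Lemma e_inv j : (j < 24)%N -> (e j)^-1 = e (inv_of mul j).
Proof.
move=> Hj.
apply/eqP; rewrite eq_invg_mul Hmul ?inv_lt //.
by move/allP: Hc3 => /(_ j); rewrite mem_iota /= => /(_ Hj) /eqP ->; rewrite e0.
Qed.

Lemma Eset_group : group_set Eset.
Proof.
apply/group_setP; split; first by rewrite -e0 e_in.
move=> x y /EsetP[i Hi ->] /EsetP[j Hj ->].
by rewrite Hmul // e_in // mul_lt.
Qed.

Lemma join_sub x y : x \in Eset -> y \in Eset -> <[x]> <*> <[y]> \subset Eset.
Proof.
move=> Hx Hy.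
have -> : Eset = Group Eset_group by [].
by rewrite join_subG !cycle_subG; apply/andP.
Qed.

Lemma card_Eset : (#|Eset| <= 24)%N.
Proof. by rewrite (leq_trans (card_set_seq_le _)) // size_map size_iota. Qed.

Hypothesis HGE : G = Eset.
Hypothesis Hcard : #|G| = 24%N.

Lemma e_inj i j : (i < 24)%N -> (j < 24)%N -> e i = e j -> i = j.
Proof.
have Hu : uniq (map e (iota 0 24)).
  by apply: card_set_seq_uniq; move: Hcard; rewrite HGE => ->; rewrite size_map size_iota.
move=> Hi Hj; apply: (uniq_map_inj Hu); by rewrite mem_iota.
Qed.


Hypothesis Hc5 : map size Bs == ks_1_1_1_2_2_17.
Hypothesis Hc6 : all uniq Bs.
Hypothesis Hc7 : all (all (fun i => i < 24)) Bs.
Hypothesis Hc8 : all (fun k => k \in flatten Bs) (iota 0 24).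
Hypothesis Hc9 : all (fun i => all (fun j => (i == j) || ~~ has (fun x => x \in nth [::] Bs j) (nth [::] Bs i))
         (iota 0 6)) (iota 0 6).
Hypothesis Hc10 : all (fun k => sumn (map (fun s => dcount mul s k) Bs) == 12) (iota 1 23).

Definition Bset (s : seq nat) := [set x in map e s].

Lemma Bs_lt s i : s \in Bs -> i \in s -> (i < 24)%N.
Proof. by move=> Hs Hi; move/allP: Hc7 => /(_ s Hs) /allP /(_ i Hi). Qed.

Lemma Bs_uniq s : s \in Bs -> uniq s.
Proof. by move=> Hs; move/allP: Hc6 => /(_ s Hs). Qed.

Lemma card_Bset s : s \in Bs -> #|Bset s| = size s.
Proof.
move=> Hs; rewrite card_set_seq ?size_map //.
rewrite map_inj_in_uniq ?Bs_uniq // => a b Ha Hb.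
by apply: e_inj; apply: (Bs_lt Hs).
Qed.

Lemma diff_Bset s k : s \in Bs -> (k < 24)%N -> diff_mult (Bset s) (e k) = dcount mul s k.
Proof.
move=> Hs Hk; rewrite /diff_mult /dcount.
set P := (fun ij : nat * nat => _).
have Hlt := Bs_lt Hs.
have -> : [set p in setX (Bset s) (Bset s) | (p.1 != p.2) && (p.1 * p.2^-1 == e k)] =
   [set x in map (fun ij : nat * nat => (e ij.1, e ij.2)) (filter P [seq (i, j) | i <- s, j <- s])].
  apply/setP => -[x y]; rewrite !inE /=.
  apply/idP/idP.
  - case/andP => /andP[/mapP[i Hi ->] /mapP[j Hj ->]] /andP[Hne /eqP Hd].
    apply/mapP; exists (i, j) => //.
    rewrite mem_filter; apply/andP; split; last by apply: allpairs_f.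
    rewrite /P /=; apply/andP; split.
      by apply: contraNneq Hne => ->.
    have Hi' := Hlt _ Hi; have Hj' := Hlt _ Hj.
    apply/eqP; apply: e_inj => //; first by rewrite mul_lt ?inv_lt.
    by rewrite -Hmul ?inv_lt // -e_inv.
  - case/mapP => -[i j]; rewrite mem_filter => /andP[/andP[/= Hne /eqP Hd]].
    case/allpairsP => -[i' j'] /= [Hi Hj [Ei Ej]]; subst i j => -[-> ->].
    have Hi' := Hlt _ Hi; have Hj' := Hlt _ Hj.
    rewrite !map_f //=; apply/andP; split.
      by apply: contraNneq Hne => Heq; rewrite (e_inj Hi' Hj' Heq).
    by rewrite e_inv // Hmul ?inv_lt // Hd.
have Hu : uniq (map (fun ij : nat * nat => (e ij.1, e ij.2))
   (filter P [seq (i, j) | i <- s, j <- s])).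
  rewrite map_inj_in_uniq.
    rewrite filter_uniq // allpairs_uniq ?Bs_uniq //.
    by move=> [a b] [c d] _ _ /=.
  move=> [a b] [c d]; rewrite !mem_filter => /andP[_ /allpairsP[[a' b'] /= [Ha Hb [Ea Eb]]]].
  move=> /andP[_ /allpairsP[[c' d'] /= [Hc Hd [Ec Ed]]]]; subst a b c d => -[H1 H2].
  by rewrite (e_inj (Hlt _ Ha) (Hlt _ Hc) H1) (e_inj (Hlt _ Hb) (Hlt _ Hd) H2).
by rewrite card_set_seq // size_map size_filter.
Qed.

Lemma bigcup_Bset L : \bigcup_(B <- map Bset L) B = [set x in map e (flatten L)].
Proof.
elim: L => [|s L IH]; first by rewrite big_nil; apply/setP => x; rewrite !inE.
rewrite /= big_cons IH; apply/setP => x; rewrite !inE map_cat mem_cat.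
by [].
Qed.

Lemma gen_pdf : hadamard_pdf_exists G ks_1_1_1_2_2_17 12.
Proof.
have HsF : size Bs = 6%N by rewrite -(size_map size) (eqP Hc5).
split; first by rewrite Hcard.
exists (map Bset Bs); split.
- rewrite bigcup_Bset HGE; apply/setP => x; rewrite !in_set.
  apply/mapP/mapP => -[i Hi ->]; exists i => //.
    rewrite mem_iota /=; case/flattenP: Hi => s Hs Hi; exact: (Bs_lt Hs Hi).
  by move/allP: Hc8 => /(_ i Hi).
- move=> i j; rewrite size_map HsF => Hi Hj Hij.
  rewrite !(nth_map [::]) ?HsF // -setI_eq0; apply/eqP/setP => x; rewrite !inE.
  apply/negbTE/negP => /andP[/mapP[a Ha ->] /mapP[b Hb Heq]].
  have Hsi : nth [::] Bs i \in Bs by rewrite mem_nth ?HsF.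
  have Hsj : nth [::] Bs j \in Bs by rewrite mem_nth ?HsF.
  have Eab : a = b by apply: e_inj => //; [exact: (Bs_lt Hsi Ha) | exact: (Bs_lt Hsj Hb)].
  move/allP: Hc9 => /(_ i); rewrite mem_iota => /(_ Hi) /allP /(_ j); rewrite mem_iota => /(_ Hj).
  rewrite (negbTE Hij) /= => /hasPn /(_ a Ha); by rewrite Eab Hb.
- rewrite -map_comp -(eqP Hc5); apply/eq_in_map => s Hs /=; exact: card_Bset.
- move=> g; rewrite HGE => /EsetP[k Hk ->] Hg1.
  have Hk0 : (0 < k)%N by case: k Hk Hg1 => // _; rewrite e0 eqxx.
  rewrite /diff_mult_fam big_map (eq_big_seq (fun s => dcount mul s k)); last first.
    by move=> s Hs; apply: diff_Bset.
  rewrite -(big_map (fun s => dcount mul s k) xpredT id) -sumnE.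
  by move/allP: Hc10 => /(_ k); rewrite mem_iota Hk0 add1n Hk => /(_ isT) /eqP.
Qed.

End Gen.

Lemma gen_pdf_check (gT : finGroupType) (G : {set gT}) (e : nat -> gT) mul Bs :
  (forall i j, (i < 24)%N -> (j < 24)%N -> e i * e j = e (mul i j)) ->
  check mul Bs -> G = Eset e -> #|G| = 24%N ->
  hadamard_pdf_exists G ks_1_1_1_2_2_17 12.
Proof.
move=> Hm; rewrite /check.
move=> /andP[H1 /andP[H2 /andP[H3 /andP[H4 /andP[H5 /andP[H6 /andP[H7 /andP[H8 /andP[H9 H10]]]]]]]]].
move=> HG Hc; exact: (gen_pdf Hm H1 H2 H3 H4 HG Hc H5 H6 H7 H8 H9 H10).
Qed.

Definition mulA (i j : nat) : nat :=
  3 * (((i %/ 3) + (j %/ 3)) %% 8) + ((i %% 3) * 2 ^ (j %/ 3) + (j %% 3)) %% 3.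
Definition BsA : seq (seq nat) :=
 [:: [:: 12]; [:: 0]; [:: 5]; [:: 10; 9]; [:: 19; 6]; [:: 1; 2; 3; 4; 7; 8; 11; 13; 14; 15; 16; 17; 18; 20; 21; 22; 23]]%N.
Lemma checkA : check mulA BsA.
Proof. Time vm_compute. reflexivity. Qed.

Lemma gen_join (gT : finGroupType) (e : nat -> gT) mul Bs x y :
  (forall i j, (i < 24)%N -> (j < 24)%N -> e i * e j = e (mul i j)) ->
  check mul Bs -> x \in Eset e -> y \in Eset e -> <[x]> <*> <[y]> \subset Eset e.
Proof.
move=> Hm; rewrite /check.
move=> /andP[H1 /andP[H2 _]].
exact: (join_sub Hm H1 H2).
Qed.

Definition mulC (i j : nat) : nat :=
  8 * (((i %/ 8) + (j %/ 8)) %% 3) + 2 * ((((i %% 8) %/ 2) + ((j %% 8) %/ 2) * 3 ^ (i %% 2)) %% 4)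
  + ((i %% 2) + (j %% 2)) %% 2.
Definition BsC : seq (seq nat) :=
 [:: [:: 18]; [:: 22]; [:: 14]; [:: 4; 17]; [:: 5; 20]; [:: 0; 1; 2; 3; 6; 7; 8; 9; 10; 11; 12; 13; 15; 16; 19; 21; 23]]%N.
Lemma checkC : check mulC BsC.
Proof. vm_compute. reflexivity. Qed.

Lemma div3E x y : ((3 * x + y %% 3) %/ 3 = x)%N.
Proof. by rewrite mulnC divnMDl // divn_small ?addn0 // ltn_mod. Qed.
Lemma mod3E x y : ((3 * x + y %% 3) %% 3 = y %% 3)%N.
Proof. by rewrite mulnC modnMDl modn_mod. Qed.

Lemma partA (gT : finGroupType) (G : {group gT}) :
      G \isog Grp (a : b : a ^+ 8, b ^+ 3, a * b^-1 = b * a) ->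
      hadamard_pdf_exists G ks_1_1_1_2_2_17 12.
Proof.
move=> iso; have := isoGrp_hom iso; case/existsP => -[a b] /=.
rewrite !xpair_eqE => /and4P[/eqP HG /eqP a8 /eqP b3 /eqP rel].
pose e k := a ^+ (k %/ 3) * b ^+ (k %% 3).
have bconj : b ^ a = b ^+ 2.
  have -> : b ^ a = b^-1 by rewrite /conjg -rel mulgA mulVg mul1g.
  by apply/eqP; rewrite eq_invg_mul -expgS b3.
have ba n : b ^+ n * a = a * b ^+ (2 * n).
  have Hc : (b ^+ n) ^ a = b ^+ (2 * n) by rewrite conjXg bconj -expgM.
  by rewrite -Hc /conjg mulgA mulgV mul1g.
have bap n p : b ^+ n * a ^+ p = a ^+ p * b ^+ (n * 2 ^ p).
  elim: p n => [|p IH] n; first by rewrite expg0 mulg1 mul1g expn0 muln1.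
  by rewrite expgSr mulgA IH -mulgA ba mulgA -expgSr expnS mulnCA.
have Hm : forall i j, (i < 24)%N -> (j < 24)%N -> e i * e j = e (mulA i j).
  move=> i j _ _; rewrite /e /mulA div3E mod3E.
  rewrite -mulgA (mulgA (b ^+ _)) bap -!mulgA -expgD mulgA -expgD.
  by rewrite (expg_mod _ a8) (expg_mod _ b3).
have HGE : G = Eset e :> {set gT}.
  apply/eqP; rewrite eqEsubset; apply/andP; split.
    rewrite -HG; apply: (gen_join Hm checkA).
      by apply/EsetP; exists 3%N => //; rewrite /e /= expg1 expg0 mulg1.
    by apply/EsetP; exists 1%N => //; rewrite /e /= expg1 expg0 mul1g.
  apply/subsetP => g /EsetP[k _ ->].
  have aG : a \in G by rewrite -HG mem_gen // inE cycle_id.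
  have bG : b \in G by rewrite -HG mem_gen // inE cycle_id orbT.
  by rewrite groupM ?groupX.
have Hle : (#|G| <= 24)%N by rewrite HGE card_Eset.
have H8 : (8 %| #|G|)%N.
  have -> : 8%N = #|[set: 'Z_8]| by rewrite cardsT card_ord.
  apply: card_homg; rewrite (iso _ [set: 'Z_8]%G).
  apply/existsP; exists (Zp1, 1) => /=; rewrite !xpair_eqE.
  rewrite cycle1 joingG1 /= -Zp_cycle eqxx /=; by rewrite invg1 mulg1 mul1g.
have H6 : (6 %| #|G|)%N.
  have -> : 6%N = #|'D_(3.*2)| by rewrite card_dihedral.
  apply: card_homg; rewrite (iso _ 'D_(3.*2)%G).
  have D6 := isoGrp_hom (Grp_dihedral (isT : 1 < 3)).
  case/existsP: D6 => -[x y] /=; rewrite !xpair_eqE.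
  move=> /and4P[/eqP HD x3 /eqP y2 /eqP xy].
  apply/existsP; exists (y, x) => /=; rewrite !xpair_eqE.
  rewrite joingC HD eqxx x3 /=.
  have -> : y ^+ 8 = (y ^+ 2) ^+ 4 by rewrite -expgM.
  rewrite y2 expg1n eqxx /=.
  by rewrite -xy /conjg mulgA mulgV mul1g.
have Hcard : #|G| = 24%N.
  apply/eqP; rewrite eqn_leq Hle /=.
  apply: dvdn_leq; first by rewrite cardG_gt0.
  by have := dvdn_lcm 8 6 #|G|; rewrite H8 H6.
exact: (gen_pdf_check Hm checkA HGE Hcard).
Qed.

Import GRing.Theory.

Section Mat.
Local Open Scope ring_scope.

Lemma pr3 : prime 3. Proof. by []. Qed.

Lemma F3val n : val (n%:R : 'F_3) = (n %% 3)%N.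
Proof. exact: (val_Fp_nat pr3). Qed.

Lemma F3eq n m : (n %% 3 = m %% 3)%N -> (n%:R : 'F_3) = m%:R.
Proof. by move=> H; apply: val_inj; rewrite /= !F3val. Qed.

Lemma F3nat (x : 'F_3) : x = (val x)%:R.
Proof. by apply: val_inj; rewrite /= F3val modn_small // (ltn_ord x). Qed.

Definition matF (a b c d : nat) : 'M['F_3]_2 :=
  \matrix_(i < 2, j < 2)
    (if (i : nat) == 0%N then (if (j : nat) == 0%N then a else b)
     else (if (j : nat) == 0%N then c else d))%:R.

Lemma matF_mul a b c d a' b' c' d' :
  matF a b c d *m matF a' b' c' d' =
  matF (a * a' + b * c') (a * b' + b * d') (c * a' + d * c') (c * b' + d * d').
Proof.
apply/matrixP => i j; rewrite !mxE big_ord_recr big_ord1 /= !mxE.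
by case: i => [[|[|//]] Hi]; case: j => [[|[|//]] Hj] /=; rewrite natrD !natrM.
Qed.

Lemma matF_mod a b c d :
  matF a b c d = matF (a %% 3) (b %% 3) (c %% 3) (d %% 3).
Proof.
apply/matrixP => i j; rewrite !mxE.
by case: ((i : nat) == 0%N); case: ((j : nat) == 0%N); apply: F3eq; rewrite modn_mod.
Qed.

Lemma matF_det a b c d : \det (matF a b c d) = ((a * d + 2 * (b * c)) %% 3)%:R.
Proof.
rewrite (expand_det_row _ ord0) big_ord_recr big_ord1 /=.
rewrite /cofactor !det_mx11 !mxE /=.
rewrite expr0 expr1 mul1r mulN1r mulrN -!natrM.
rewrite -(@F3eq (a * d + 2 * (b * c)) ((a * d + 2 * (b * c)) %% 3)) ?modn_mod // natrD; congr (_ + _).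
apply/eqP; rewrite eq_sym -subr_eq0 opprK -natrD.
apply/eqP; apply: val_inj; rewrite /= F3val; lia.
Qed.

End Mat.

Definition tabB : seq (nat * nat * nat * nat) := [:: (1,0,0,1); (0,1,2,0); (0,1,2,1); (0,1,2,2); (0,2,1,0); (0,2,1,1); (0,2,1,2); (1,0,1,1); (1,0,2,1); (1,1,0,1); (1,1,1,2); (1,1,2,0); (1,2,0,1); (1,2,1,0); (1,2,2,2); (2,0,0,2); (2,0,1,2); (2,0,2,2); (2,1,0,2); (2,1,1,1); (2,1,2,0); (2,2,0,2); (2,2,1,0); (2,2,2,1)]%N.
Definition Tm (k : nat) := nth (0, 0, 0, 0)%N tabB k.
Definition matT (t : nat * nat * nat * nat) := let: (a, b, c, d) := t in matF a b c d.
Definition prodT (t t' : nat * nat * nat * nat) : nat * nat * nat * nat :=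
  let: (a, b, c, d) := t in let: (a', b', c', d') := t' in
  ((a * a' + b * c') %% 3, (a * b' + b * d') %% 3, (c * a' + d * c') %% 3, (c * b' + d * d') %% 3)%N.
Definition detT (t : nat * nat * nat * nat) : nat :=
  let: (a, b, c, d) := t in ((a * d + 2 * (b * c)) %% 3)%N.
Definition mulB (i j : nat) : nat := find (fun k => Tm k == prodT (Tm i) (Tm j)) (iota 0 24).
Definition BsB : seq (seq nat) :=
 [:: [:: 16]; [:: 8]; [:: 5]; [:: 7; 11]; [:: 4; 23]; [:: 0; 1; 2; 3; 6; 9; 10; 12; 13; 14; 15; 17; 18; 19; 20; 21; 22]]%N.
Lemma checkB : check mulB BsB.
Proof. vm_compute. reflexivity. Qed.
Definition checkB2 : bool :=
  [&& size tabB == 24,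
      all (fun i => all (fun j => Tm (mulB i j) == prodT (Tm i) (Tm j)) (iota 0 24)) (iota 0 24),
      all (fun k => detT (Tm k) == 1) (iota 0 24) &
      all (fun a => all (fun b => all (fun c => all (fun d =>
         (detT (a, b, c, d) == 1) ==> ((a, b, c, d) \in tabB)) (iota 0 3)) (iota 0 3)) (iota 0 3)) (iota 0 3)]%N.
Lemma checkB2_ok : checkB2.
Proof. vm_compute. reflexivity. Qed.

Section MatT.
Local Open Scope ring_scope.
Lemma matT_mul t t' : matT t *m matT t' = matT (prodT t t').
Proof.
case: t => [[[a b] c] d]; case: t' => [[[a' b'] c'] d'] /=.
by rewrite matF_mul matF_mod.
Qed.
Lemma matT_det t : \det (matT t) = (detT t)%:R.
Proof. by case: t => [[[a b] c] d]; exact: matF_det. Qed.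
End MatT.

Local Open Scope group_scope.

Definition eB (k : nat) : {'GL_2(3)} := insubd (1 : {'GL_2(3)}) (matT (Tm k)).

Lemma eB_val k : (k < 24)%N -> GLval (eB k) = matT (Tm k).
Proof.
move=> Hk; rewrite /eB insubdK //.
have Hd : detT (Tm k) = 1%N.
  by move: checkB2_ok => /and4P[_ _ /allP /(_ k) H _]; apply/eqP; apply: H; rewrite mem_iota.
have : matT (Tm k) \in unitmx by rewrite unitmxE matT_det Hd GRing.unitr1.
by [].
Qed.

Lemma HmB i j : (i < 24)%N -> (j < 24)%N -> eB i * eB j = eB (mulB i j).
Proof.
move=> Hi Hj.
have Hm : (mulB i j < 24)%N.
  by move: checkB => /andP[/allP /(_ i) H _]; move: H; rewrite mem_iota => /(_ Hi) /allP /(_ j); rewrite mem_iota; apply.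
apply: val_inj; rewrite -[val _]/(GLval _) -[val (eB _)]/(GLval _) GL_MxE !eB_val //.
rewrite matT_mul; congr matT; apply/esym/eqP.
by move: checkB2_ok => /and4P[_ /allP /(_ i) H _ _]; move: H; rewrite mem_iota => /(_ Hi) /allP /(_ j); rewrite mem_iota; apply.
Qed.


Lemma HGEB : SL23 = Eset eB.
Proof.
apply/setP => g; rewrite inE; apply/idP/idP.
- move=> Hdet.
  set M := GLval g.
  pose t := (val (M 0 0)%R, val (M 0 1)%R, val (M 1 0)%R, val (M 1 1)%R)%N.
  have HM : M = matT t.
    apply/matrixP => i j; rewrite /t /matT /matF mxE.
    by case: i => [[|[|//]] Hi]; case: j => [[|[|//]] Hj] /=; rewrite -F3nat;
      congr (M _ _); apply: val_inj.
  have Hd : detT t = 1%N.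
    move: Hdet; rewrite -/M HM matT_det => /eqP /(congr1 val); rewrite /= F3val.
    by rewrite /detT /= modn_mod.
  have Ht : t \in tabB.
    move: checkB2_ok => /and4P[_ _ _ /allP H].
    have lt3 (x : 'F_3) : val x \in iota 0 3 by rewrite mem_iota (ltn_ord x).
    move: (H _ (lt3 (M 0 0)%R)) => /allP /(_ _ (lt3 (M 0 1)%R)) /allP /(_ _ (lt3 (M 1 0)%R)).
    by move=> /allP /(_ _ (lt3 (M 1 1)%R)); rewrite Hd eqxx.
  apply/EsetP; exists (index t tabB).
    by move: checkB2_ok => /and4P[/eqP <- _ _ _]; rewrite index_mem.
  apply: val_inj; rewrite -[val _]/(GLval _) -[val (eB _)]/(GLval _) eB_val.
    by rewrite /Tm nth_index.
  by move: checkB2_ok => /and4P[/eqP <- _ _ _]; rewrite index_mem.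
- case/EsetP => k Hk ->.
  rewrite eB_val // matT_det.
  by move: checkB2_ok => /and4P[_ _ /allP /(_ k) H _]; move: H; rewrite mem_iota => /(_ Hk) /eqP ->.
Qed.

Definition checkB3 : bool :=
  uniq tabB && all (fun t => let: (a, b, c, d) := t in [&& a < 3, b < 3, c < 3 & d < 3]%N) tabB.
Lemma checkB3_ok : checkB3.
Proof. vm_compute. reflexivity. Qed.

Definition fB (g : {'GL_2(3)}) : nat * nat * nat * nat :=
  (val (GLval g 0 0)%R, val (GLval g 0 1)%R, val (GLval g 1 0)%R, val (GLval g 1 1)%R)%N.

Lemma fB_eB k : (k < 24)%N -> fB (eB k) = Tm k.
Proof.
move=> Hk; rewrite /fB eB_val //.
have : Tm k \in tabB by rewrite mem_nth //; move: checkB2_ok => /and4P[/eqP -> _ _ _].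
move: checkB3_ok => /andP[_ /allP H] /H.
case: (Tm k) => [[[a b] c] d] /and4P[ha hb hc hd].
by rewrite /= !mxE /= !F3val !modn_small.
Qed.

Lemma card_SL23 : #|SL23| = 24%N.
Proof.
rewrite HGEB card_set_seq ?size_map ?size_iota //.
apply: (@map_uniq _ _ fB).
have -> : map fB (map eB (iota 0 24)) = tabB.
  rewrite -map_comp.
  have -> : map (fB \o eB) (iota 0 24) = map Tm (iota 0 24).
    by apply/eq_in_map => k; rewrite mem_iota /= => Hk; apply: fB_eB.
  have Hs : size tabB = 24%N by move: checkB2_ok => /and4P[/eqP -> _ _ _].
  by rewrite -Hs -/(mkseq _ _) mkseq_nth.
by move: checkB3_ok => /andP[].
Qed.

Lemma partB : hadamard_pdf_exists SL23 ks_1_1_1_2_2_17 12.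
Proof. exact: (gen_pdf_check HmB checkB HGEB card_SL23). Qed.

Lemma decC1 t p q : (((8 * (t %% 3) + 2 * (p %% 4) + q %% 2) %/ 8) = t %% 3)%N.
Proof. lia. Qed.
Lemma decC2 t p q : ((((8 * t + 2 * (p %% 4) + q %% 2) %% 8) %/ 2) = p %% 4)%N.
Proof. lia. Qed.
Lemma decC3 t p q : (((8 * t + 2 * p + q %% 2) %% 2) = q %% 2)%N.
Proof. lia. Qed.

Lemma partC : hadamard_pdf_exists [set: ('Z_3 * gsort 'D_8)%type] ks_1_1_1_2_2_17 12.
Proof.
have D8 := isoGrp_hom (Grp_dihedral (isT : 1 < 4)).
case/existsP: D8 => -[x y] /=; rewrite !xpair_eqE.
move=> /and4P[/eqP HD /eqP x4 /eqP y2 /eqP xy].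
pose z : 'Z_3 := Zp1.
have z3 : z ^+ 3 = 1 by apply/eqP; rewrite -order_dvdn order_Zp1.
pose e k := (z ^+ (k %/ 8), x ^+ ((k %% 8) %/ 2) * y ^+ (k %% 2)) : ('Z_3 * gsort 'D_8)%type.
have yV : y^-1 = y by apply/eqP; rewrite eq_invg_mul -[y * y]/(y ^+ 2) y2.
have xyc : x ^ y = x ^+ 3 by rewrite xy; apply/eqP; rewrite eq_invg_mul -expgS x4.
have yx p : y * x ^+ p = x ^+ (3 * p) * y.
  have Hc : (x ^+ p) ^ y = x ^+ (3 * p) by rewrite conjXg xyc -expgM.
  by rewrite -Hc /conjg yV -!mulgA -[y * y]/(y ^+ 2) y2 mulg1.
have yxq q p : y ^+ q * x ^+ p = x ^+ (p * 3 ^ q) * y ^+ q.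
  elim: q p => [|q IH] p; first by rewrite expg0 mulg1 mul1g expn0 muln1.
  by rewrite expgS -mulgA IH mulgA yx mulnCA -expnS -mulgA -expgS.
have Hm : forall i j, (i < 24)%N -> (j < 24)%N -> e i * e j = e (mulC i j).
  move=> i j _ _; rewrite /e /mulC.
  rewrite decC1 decC2 decC3.
  congr (_, _).
    by rewrite -expgD (expg_mod _ z3).
  rewrite -mulgA (mulgA (y ^+ _)) yxq -!mulgA -expgD mulgA -expgD.
  by rewrite (expg_mod _ x4) (expg_mod _ y2).
have HGE : [set: ('Z_3 * gsort 'D_8)%type] = Eset e.
  apply/eqP; rewrite eqEsubset subsetT andbT; apply/subsetP => -[w d] _.
  have : w \in <[z]> by rewrite /z -Zp_cycle inE.
  case/cycleP => i ->.
  have : d \in <[x]> * <[y]>.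
    rewrite -norm_joinEr ?HD ?inE //.
    by rewrite cycle_subG inE /= -cycleJ xy cycleV subxx.
  case/mulsgP => u v /cycleP[p ->] /cycleP[q ->] ->.
  apply/EsetP; exists (8 * (i %% 3) + 2 * (p %% 4) + q %% 2)%N; first lia.
  rewrite /e decC1 decC2 decC3.
  by rewrite (expg_mod _ z3) (expg_mod _ x4) (expg_mod _ y2).
have Hcard : #|[set: ('Z_3 * gsort 'D_8)%type]| = 24%N.
  rewrite cardsT card_prod card_ord -cardsT (_ : #|_| = 8%N) //; exact: (card_dihedral (isT : 1 < 4)).
exact: (gen_pdf_check Hm checkC HGE Hcard).
Qed.

Local Open Scope group_scope.

Theorem mainTheorem10 :
  (* (a) C_3 x| C_8 = < a, b | a^8 = b^3 = 1, a b^-1 = b a > *)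
  (forall (gT : finGroupType) (G : {group gT}),
      G \isog Grp (a : b : a ^+ 8, b ^+ 3, a * b^-1 = b * a) ->
      hadamard_pdf_exists G ks_1_1_1_2_2_17 12)
  /\
  (* (b) SL(2,3) *)
  hadamard_pdf_exists SL23 ks_1_1_1_2_2_17 12
  /\
  (* (c) Z_3 x D_8, D_8 the dihedral group of order 8 *)
  hadamard_pdf_exists [set: ('Z_3 * gsort 'D_8)%type] ks_1_1_1_2_2_17 12.
Proof.
split; first exact: partA.
split; first exact: partB.
exact: partC.
Qed.
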